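(* Assume a geometry satisfying axioms G1, G2, G3, L1, L2. If $\sigma$ is a dilatation, then its inverse map $\sigma^{-1}$ is also a dilatation (in particular, $\sigma^{-1}$ is injective in the sense that $S\ne T$ implies $\sigma^{-1}S\ne\sigma^{-1}T$).
   Context: Constructive setting: all reasoning is in Bishop-style constructive mathematics with intuitionistic logic (no law of excluded middle; a statement ''A or B'' requires a procedure deciding which holds, and existence requires a construction). A geometry $(\mathscr P,\mathscr L)$ consists of a set $\mathscr P$ of points with an equality relation, a set $\mathscr L$ of lines, each line being a subset of $\mathscr P$ (lines are equal iff equal as subsets), and a primitive relation $P\ne Q$ (''distinct points'') on $\mathscr P$, invariant under equality, such that: (c1) $\neg(P\ne P)$; (c2) $P\ne Q$ implies $Q\ne P$; (c3) if $P\ne Q$ then every point $R$ satisfies $R\ne P$ or $R\ne Q$; (c4) $\neg(P\ne Q)$ implies $P=Q$. (The relation $P\ne Q$ is affirmative, not merely the negation of equality.) A point $P$ lies outside a line $l$, written $P\notin l$, if $P\ne Q$ for every $Q\in l$. Lines are distinct, $l\ne m$, if some point of $l$ lies outside $m$ or some point of $m$ lies outside $l$. Lines are nonparallel, $l\nparallel m$, if $l\ne m$ and a point of $l\cap m$ can be exhibited; they are parallel, $l\parallel m$, if $\neg(l\nparallel m)$. Nonparallel lines have a unique common point, denoted $l\cap m$. Axioms: (G1) for distinct points $P,Q$ there is a unique line, denoted $P+Q$, containing both; (G2) for any point $P$ and line $l$ there is a unique line through $P$ parallel to $l$; (G3) there exist distinct points $A,B,C$ with $C\notin A+B$; (L1)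 if $l\nparallel m$, $P=l\cap m$, and $Q\ne P$, then $Q\notin l$ or $Q\notin m$; (L2) if $l\nparallel m$, then every line $n$ satisfies $n\nparallel l$ or $n\nparallel m$. A map $\varphi:\mathscr P\to\mathscr P$ is injective if $P\ne Q$ implies $\varphi P\ne\varphi Q$. A dilatation is a map $\sigma:\mathscr P\to\mathscr P$ that is injective and onto and satisfies $P+Q\parallel\sigma P+\sigma Q$ whenever $P\ne Q$. *)

(* Defs.v *)
Set Implicit Arguments.

(* A constructive geometry: a Bishop set of points with equality [peq] and a
   primitive affirmative apartness [pneq]; lines are (extensional) subsets of
   points, given via a type [Ln] with membership [on]. *)
Record Geometry := {
  Pt : Type;
  peq : Pt -> Pt -> Prop;
  peq_refl : forall P, peq P P;
  peq_sym : forall P Q, peq P Q -> peq Q P;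
  peq_trans : forall P Q R, peq P Q -> peq Q R -> peq P R;
  pneq : Pt -> Pt -> Prop;
  pneq_ext : forall P P' Q Q', peq P P' -> peq Q Q' -> pneq P Q -> pneq P' Q';
  c1 : forall P, ~ pneq P P;
  c2 : forall P Q, pneq P Q -> pneq Q P;
  c3 : forall P Q, pneq P Q -> forall R, pneq R P \/ pneq R Q;
  c4 : forall P Q, ~ pneq P Q -> peq P Q;
  Ln : Type;
  on : Pt -> Ln -> Prop;
  on_ext : forall P Q l, peq P Q -> on P l -> on Q l
}.
Arguments peq {_}. Arguments pneq {_}. Arguments on {_}.

Section Notions.
Context {G : Geometry}.

Definition leq (l m : Ln G) : Prop := forall P, on P l <-> on P m.
Definition outside (P : Pt G) (l : Ln G) : Prop := forall Q, on Q l -> pneq P Q.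
Definition lneq (l m : Ln G) : Prop :=
  (exists P, on P l /\ outside P m) \/ (exists P, on P m /\ outside P l).
Definition nonparallel (l m : Ln G) : Prop :=
  lneq l m /\ exists P, on P l /\ on P m.
Definition parallel (l m : Ln G) : Prop := ~ nonparallel l m.

Definition G1 : Prop := forall P Q, pneq P Q ->
  exists l, on P l /\ on Q l /\ forall m, on P m -> on Q m -> leq l m.
Definition G2 : Prop := forall P (l : Ln G),
  exists m, on P m /\ parallel m l /\
    forall m', on P m' -> parallel m' l -> leq m m'.
Definition G3 : Prop := exists A B C,
  pneq A B /\ pneq A C /\ pneq B C /\
  exists l, on A l /\ on B l /\ outside C l.
Definition L1 : Prop := forall l m P Q,
  nonparallel l m -> on P l -> on P m -> pneq Q P -> outside Q l \/ outside Q m.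
Definition L2 : Prop := forall l m,
  nonparallel l m -> forall n, nonparallel n l \/ nonparallel n m.

Definition is_map (f : Pt G -> Pt G) : Prop :=
  forall P Q, peq P Q -> peq (f P) (f Q).
Definition injective (f : Pt G -> Pt G) : Prop :=
  forall P Q, pneq P Q -> pneq (f P) (f Q).
Definition onto (f : Pt G -> Pt G) : Prop :=
  forall Q, exists P, peq (f P) Q.
(* P + Q || sigma P + sigma Q whenever P <> Q; l, m are the lines P+Q and
   sigma P + sigma Q (unique by G1, as sigma P <> sigma Q by injectivity). *)
Definition dilatation (f : Pt G -> Pt G) : Prop :=
  is_map f /\ injective f /\ onto f /\
  forall P Q l m, pneq P Q -> on P l -> on Q l -> on (f P) m -> on (f Q) m ->
    parallel l m.
End Notions.

(* Main.v *)
Require Import Defs.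

Section S.
Variable G : Geometry.
Lemma c1' (P : Pt G) : ~ pneq P P. Proof. apply c1. Qed.
Lemma c2' (P Q : Pt G) : pneq P Q -> pneq Q P. Proof. apply c2. Qed.
Lemma c3' (P Q : Pt G) : pneq P Q -> forall R, pneq R P \/ pneq R Q. Proof. apply c3. Qed.

Lemma np_sym (l m : Ln G) : nonparallel l m -> nonparallel m l.
Proof. intros [[H|H] [P [H1 H2]]]; split; try (exists P; split; assumption); unfold lneq; tauto. Qed.

Lemma par_sym (l m : Ln G) : parallel l m -> parallel m l.
Proof. intros H H'; apply H, np_sym, H'. Qed.

Lemma transfer (hL2 : @L2 G) (l l' m m' : Ln G) :
  parallel l l' -> parallel m m' -> nonparallel l' m' -> nonparallel l m.
Proof.
  intros H1 H2 H3. destruct (hL2 _ _ H3 l) as [H|H]; [exfalso; now apply H1|].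
  apply np_sym in H. destruct (hL2 _ _ H m) as [H'|H']; [exfalso; now apply H2|].
  now apply np_sym.
Qed.

Lemma np_of_outside (l m : Ln G) P Q :
  on P l -> on P m -> on Q l -> outside Q m -> nonparallel l m.
Proof. intros; split; [left; eauto|eauto]. Qed.

Lemma two_pts (hL1 : @L1 G) (p n : Ln G) Y Z :
  nonparallel p n -> on Y p -> on Z p -> pneq Y Z -> outside Y n \/ outside Z n.
Proof.
  intros Hn HY HZ HYZ. destruct Hn as [Hd [X [HX1 HX2]]].
  destruct (c3' _ _ HYZ X) as [H|H].
  - destruct (hL1 p n X Y (conj Hd (ex_intro _ X (conj HX1 HX2))) HX1 HX2 (c2' _ _ H)) as [H'|H'].
    + exfalso; exact (c1' _ (H' _ HY)).
    + now left.
  - destruct (hL1 p n X Z (conj Hd (ex_intro _ X (conj HX1 HX2))) HX1 HX2 (c2' _ _ H)) as [H'|H'].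
    + exfalso; exact (c1' _ (H' _ HZ)).
    + now right.
Qed.

Lemma exists_outside (hG1 : @G1 G) (hG3 : @G3 G) (hL1 : @L1 G) (hL2 : @L2 G)
  (n : Ln G) : exists W, outside W n.
Proof.
  destruct hG3 as [A [B [C [HAB [HAC [HBC [p [HA [HB HC]]]]]]]]].
  destruct (hG1 _ _ HAC) as [q [HAq [HCq _]]].
  assert (Hpq : nonparallel q p) by exact (np_of_outside q p A C HAq HA HCq HC).
  destruct (hL2 _ _ Hpq n) as [H|H]; apply np_sym in H.
  - destruct (two_pts hL1 _ _ _ _ H HAq HCq HAC) as [H'|H']; eauto.
  - destruct (two_pts hL1 _ _ _ _ H HA HB HAB) as [H'|H']; eauto.
Qed.

Lemma SE (hG1 : @G1 G) (hG3 : @G3 G) (hL1 : @L1 G) (hL2 : @L2 G)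
  (sigma : Pt G -> Pt G) (hs : dilatation sigma) x y :
  pneq (sigma x) (sigma y) -> pneq x y.
Proof.
  destruct hs as [_ [hinj [_ hpar]]]. intro Hxy.
  destruct (hG1 _ _ Hxy) as [n [Hxn [Hyn _]]].
  assert (final : forall R, pneq x R -> pneq y R -> outside (sigma R) n -> pneq x y).
  { intros R HxR HyR HRn.
    assert (HRx : pneq (sigma R) (sigma x)) by (apply HRn; auto).
    assert (HRy : pneq (sigma R) (sigma y)) by (apply HRn; auto).
    destruct (hG1 _ _ HRx) as [a [Ha1 [Ha2 _]]].
    destruct (hG1 _ _ HRy) as [b [Hb1 [Hb2 _]]].
    assert (Han : nonparallel a n) by exact (np_of_outside a n _ _ Ha2 Hxn Ha1 HRn).
    destruct (hL1 a n (sigma x) (sigma y) Han Ha2 Hxn (c2' _ _ Hxy)) as [Hya|Hyn'];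
      [|exfalso; exact (c1' _ (Hyn' _ Hyn))].
    assert (Hba : nonparallel b a) by exact (np_of_outside b a _ _ Hb1 Ha1 Hb2 Hya).
    destruct (hG1 _ _ (c2' _ _ HxR)) as [l [Hl1 [Hl2 _]]].
    destruct (hG1 _ _ (c2' _ _ HyR)) as [m [Hm1 [Hm2 _]]].
    assert (Pla : parallel l a) by exact (hpar _ _ _ _ (c2' _ _ HxR) Hl1 Hl2 Ha1 Ha2).
    assert (Pmb : parallel m b) by exact (hpar _ _ _ _ (c2' _ _ HyR) Hm1 Hm2 Hb1 Hb2).
    assert (Hml : nonparallel m l) by exact (transfer hL2 m b l a Pmb Pla Hba).
    apply np_sym in Hml.
    destruct (hL1 l m R x Hml Hl1 Hm1 HxR) as [H|H].
    - exfalso; exact (c1' _ (H _ Hl2)).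
    - now apply H. }
  pose proof hG3 as H3. destruct H3 as [A [B [C [HAB _]]]].
  assert (HR1 : exists R1, pneq x R1)
    by (destruct (c3' _ _ HAB x); eauto).
  destruct HR1 as [R1 HxR1].
  destruct (hG1 _ _ HxR1) as [k [Hk1 [Hk2 _]]].
  destruct (exists_outside hG1 hG3 hL1 hL2 k) as [R2 HR2].
  assert (HR2x : pneq R2 x) by auto.
  destruct (c3' _ _ HxR1 y) as [H|HyR1]; [exact (c2' _ _ H)|].
  destruct (c3' _ _ HR2x y) as [HyR2|H]; [|exact (c2' _ _ H)].
  destruct (hG1 _ _ (c2' _ _ HR2x)) as [j [Hj1 [Hj2 _]]].
  destruct (hG1 _ _ (hinj _ _ HxR1)) as [k' [Hk'1 [Hk'2 _]]].
  destruct (hG1 _ _ (hinj _ _ (c2' _ _ HR2x))) as [j' [Hj'1 [Hj'2 _]]].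
  assert (Pk : parallel k k') by exact (hpar _ _ _ _ HxR1 Hk1 Hk2 Hk'1 Hk'2).
  assert (Pj : parallel j j') by exact (hpar _ _ _ _ (c2' _ _ HR2x) Hj1 Hj2 Hj'1 Hj'2).
  assert (Hjk : nonparallel j k) by exact (np_of_outside j k _ _ Hj1 Hk1 Hj2 HR2).
  assert (Hjk' : nonparallel j' k') by (eapply (transfer hL2); [exact (par_sym _ _ Pj)|exact (par_sym _ _ Pk)|exact Hjk]).
  destruct (hL2 _ _ Hjk' n) as [H|H]; apply np_sym in H.
  - destruct (two_pts hL1 _ _ _ _ H Hj'1 Hj'2 (hinj _ _ (c2' _ _ HR2x))) as [H'|H'].
    + exfalso; exact (c1' _ (H' _ Hxn)).
    + apply (final R2); auto. exact (c2' _ _ HR2x).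
  - destruct (two_pts hL1 _ _ _ _ H Hk'1 Hk'2 (hinj _ _ HxR1)) as [H'|H'].
    + exfalso; exact (c1' _ (H' _ Hxn)).
    + apply (final R1); auto.
Qed.
End S.

Theorem theorem3p4 (G : Geometry)
  (hG1 : @G1 G) (hG2 : @G2 G) (hG3 : @G3 G) (hL1 : @L1 G) (hL2 : @L2 G)
  (sigma tau : Pt G -> Pt G)
  (hsigma : dilatation sigma)
  (hinv1 : forall Q, peq (sigma (tau Q)) Q)
  (hinv2 : forall P, peq (tau (sigma P)) P) :
  dilatation tau.
Proof.
  assert (Hinj : injective tau).
  { intros P Q H. apply (SE G hG1 hG3 hL1 hL2 sigma hsigma).
    eapply pneq_ext; [apply peq_sym, hinv1|apply peq_sym, hinv1|exact H]. }
  destruct hsigma as [hmap [hinj [hont hpar]]].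
  split; [|split; [exact Hinj|split]].
  - intros P Q H. apply c4. intro H'.
    apply (hinj _ _) in H'.
    eapply (c1 G Q). eapply pneq_ext; [apply hinv1|apply hinv1|].
    eapply pneq_ext; [|apply peq_refl|exact H'].
    eapply peq_trans; [apply hinv1|]. eapply peq_trans; [exact H|apply peq_sym, hinv1].
  - intros Q. exists (sigma Q). apply hinv2.
  - intros P Q l m HPQ HPl HQl HPm HQm.
    apply par_sym.
    apply (hpar (tau P) (tau Q) m l (Hinj _ _ HPQ) HPm HQm).
    + eapply on_ext; [apply peq_sym, hinv1|exact HPl].
    + eapply on_ext; [apply peq_sym, hinv1|exact HQl].
Qed.
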